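(* Let $B=\bigoplus_{i\in\mathbb{Z}}B_i$ be a $\mathbb{Z}$-graded noetherian normal integral domain containing $\mathbb{Q}$. If $B$ is saturated in codimension $1$, then for every integer $d>0$: (a) every derivation $\delta:B^{(d)}\to B^{(d)}$ extends uniquely to a derivation $D:B\to B$; (b) every locally nilpotent derivation $\delta:B^{(d)}\to B^{(d)}$ extends uniquely to a locally nilpotent derivation $D:B\to B$.
   Context: $B^{(d)}=\bigoplus_{i\in\mathbb{Z}}B_{di}$. Derivations are not assumed homogeneous. A derivation $D$ is locally nilpotent if for each $b$ there is $n>0$ with $D^n(b)=0$. For a $\mathbb{Z}$-graded domain $C$, $e(C)=\gcd\{i\in\mathbb{Z}: C_i\neq0\}$. $B$ is saturated in codimension $1$ if $e(B/\mathfrak{p})=e(B)$ for every homogeneous prime ideal $\mathfrak{p}$ of $B$ of height $1$. *)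

(* Defs.v *)
From HB Require Import structures.
From mathcomp Require Import all_boot all_order all_algebra.
From mathcomp Require Import fraction.
Set Implicit Arguments. Unset Strict Implicit. Unset Printing Implicit Defensive.
Import Order.TTheory GRing.Theory Num.Theory.
Local Open Scope ring_scope.

Section GradedDefs.
Variable B : idomainType.

Definition subsetB (I J : B -> Prop) := forall x, I x -> J x.

Definition is_ideal (I : B -> Prop) : Prop :=
  [/\ I 0, (forall x y, I x -> I y -> I (x - y)) & (forall a x, I x -> I (a * x))].

Definition noetherian : Prop :=
  forall I : nat -> B -> Prop, (forall n, is_ideal (I n)) ->
  (forall n, subsetB (I n) (I n.+1)) ->
  exists N, forall n, (N <= n)%N -> forall x, I n x <-> I N x.

Definition normal_domain : Prop :=
  forall x : {fraction B},
    (exists p : {poly B}, p \is monic /\ root (map_poly (@FracField.tofrac B) p) x) ->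
    exists b : B, x = FracField.tofrac b.

Definition contains_Q : Prop := forall n : nat, (n.+1)%:R \is a @GRing.unit B.

Definition is_Zgrading (G : int -> B -> Prop) : Prop :=
  [/\ (forall i, G i 0),
      (forall i x y, G i x -> G i y -> G i (x - y)),
      (forall i j x y, G i x -> G j y -> G (i + j) (x * y)),
      (forall b, exists (s : seq int) (f : int -> B),
          [/\ uniq s, (forall i, G i (f i)) & b = \sum_(i <- s) f i])
    & (forall (s : seq int) (f : int -> B), uniq s -> (forall i, G i (f i)) ->
          \sum_(i <- s) f i = 0 -> forall i, i \in s -> f i = 0)].

Definition veronese (G : int -> B -> Prop) (d : nat) (x : B) : Prop :=
  exists (s : seq int) (f : int -> B),
    [/\ forall i, i \in s -> (d%:Z %| i)%Z /\ G i (f i) & x = \sum_(i <- s) f i].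

Definition is_prime_ideal (P : B -> Prop) : Prop :=
  [/\ is_ideal P, ~ P 1 & forall x y, P (x * y) -> P x \/ P y].

Definition is_homogeneous_ideal (G : int -> B -> Prop) (P : B -> Prop) : Prop :=
  is_ideal P /\
  forall x, P x -> forall (s : seq int) (f : int -> B),
    uniq s -> (forall i, G i (f i)) -> x = \sum_(i <- s) f i ->
    forall i, i \in s -> P (f i).

Definition height_one_prime (P : B -> Prop) : Prop :=
  [/\ is_prime_ideal P, (exists x, P x /\ x != 0) &
      forall Q, is_prime_ideal Q -> (exists x, Q x /\ x != 0) ->
        subsetB Q P -> subsetB P Q].

Definition derivation (D : B -> B) : Prop :=
  (forall x y, D (x + y) = D x + D y) /\ (forall x y, D (x * y) = x * D y + y * D x).

(* Derivation of the subring S (given as a predicate), represented by a map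
   B -> B whose values outside S are irrelevant. *)
Definition derivation_on (S : B -> Prop) (delta : B -> B) : Prop :=
  [/\ forall x, S x -> S (delta x),
      forall x y, S x -> S y -> delta (x + y) = delta x + delta y
    & forall x y, S x -> S y -> delta (x * y) = x * delta y + y * delta x].

Definition locally_nilpotent_on (S : B -> Prop) (delta : B -> B) : Prop :=
  forall x, S x -> exists n : nat, (0 < n)%N /\ iter n delta x = 0.

Definition locally_nilpotent (D : B -> B) : Prop := locally_nilpotent_on (fun _ => True) D.

End GradedDefs.

Definition is_gcd_set (S : int -> Prop) (g : int) : Prop :=
  [/\ (0 <= g)%R, (forall i, S i -> (g %| i)%Z) &
      forall c : int, (forall i, S i -> (c %| i)%Z) -> (c %| g)%Z].

Definition degset_B (B : idomainType) (G : int -> B -> Prop) (i : int) : Prop :=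
  exists b, G i b /\ b != 0.

(* For a homogeneous prime P, (B/P)_i = (B_i + P)/P is nonzero iff B_i is not inside P;
   e(B/P) = gcd{ i : (B/P)_i <> 0 }. *)
Definition degset_quot (B : idomainType) (G : int -> B -> Prop) (P : B -> Prop) (i : int) : Prop :=
  exists b, G i b /\ ~ P b.

Definition saturated_in_codim1 (B : idomainType) (G : int -> B -> Prop) : Prop :=
  forall P : B -> Prop, is_homogeneous_ideal G P -> height_one_prime P ->
    forall g1 g2, is_gcd_set (degset_quot G P) g1 -> is_gcd_set (degset_B G) g2 -> g1 = g2.

(* Main.v *)
Require Import Defs.
From HB Require Import structures.
From mathcomp Require Import all_boot all_order all_algebra.
From mathcomp Require Import fraction.
From Stdlib Require Import ClassicalEpsilon Classical.
From mathcomp Require Import ring zify.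
Set Implicit Arguments. Unset Strict Implicit. Unset Printing Implicit Defensive.
Import Order.TTheory GRing.Theory Num.Theory.
Local Open Scope ring_scope.

Lemma sum_superset (R : nmodType) (s t : seq int) (F : int -> R) :
  uniq s -> uniq t -> {subset s <= t} ->
  \sum_(i <- t) (if i \in s then F i else 0) = \sum_(i <- s) F i.
Proof.
move=> us ut sst; rewrite -big_mkcond -big_filter; apply: perm_big.
apply: uniq_perm; first exact: filter_uniq.
  by [].
by move=> x; rewrite mem_filter; case xs: (x \in s) => //=; rewrite sst.
Qed.

Lemma sum_pick (R : nmodType) (s : seq int) (a : int) (F : int -> R) :
  uniq s -> \sum_(i <- s) (if i == a then F i else 0) = if a \in s then F a else 0.
Proof.
move=> us; case: ifP => ha.
  rewrite (bigD1_seq a) //= eqxx big1 ?addr0 // => i /negbTE ->; done.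
rewrite big1_seq // => i /andP [_ hi]; case: eqP => // e; by rewrite -e hi in ha.
Qed.

Section Grading.
Variable B : idomainType.
Variable G : int -> B -> Prop.
Hypothesis HG : is_Zgrading G.

Lemma G0 i : G i 0. Proof. by case: HG. Qed.
Lemma GB i x y : G i x -> G i y -> G i (x - y). Proof. by case: HG => _ h _ _ _; apply: h. Qed.
Lemma GM i j x y : G i x -> G j y -> G (i + j) (x * y). Proof. by case: HG => _ _ h _ _; apply: h. Qed.
Lemma GN i x : G i x -> G i (- x). Proof. by move=> h; rewrite -sub0r; apply: GB => //; apply: G0. Qed.
Lemma GD i x y : G i x -> G i y -> G i (x + y).
Proof. by move=> hx hy; rewrite -[y]opprK; apply: GB => //; apply: GN. Qed.

Definition dec (x : B) : {sf : seq int * (int -> B) |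
   [/\ uniq sf.1, (forall i, G i (sf.2 i)) & x = \sum_(i <- sf.1) sf.2 i]}.
Proof.
apply: constructive_indefinite_description.
case: HG => _ _ _ h _; have [s [f [u hf e]]] := h x.
by exists (s, f).
Defined.

Definition gsupp x := (sval (dec x)).1.
Definition gcomp x i := if i \in gsupp x then (sval (dec x)).2 i else 0.

Lemma supp_uniq x : uniq (gsupp x). Proof. by case: (svalP (dec x)). Qed.
Lemma compG x i : G i (gcomp x i).
Proof. rewrite /gcomp; case: ifP => _; last exact: G0. by case: (svalP (dec x)). Qed.
Lemma comp_out x i : i \notin gsupp x -> gcomp x i = 0.
Proof. by rewrite /gcomp => /negbTE ->. Qed.
Lemma comp_sum x : x = \sum_(i <- gsupp x) gcomp x i.
Proof.
case: (svalP (dec x)) => _ _ e; rewrite {1}e.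
by apply: eq_big_seq => i hi; rewrite /gcomp /gsupp hi.
Qed.

Lemma comp_unique (s : seq int) (f : int -> B) x :
  uniq s -> (forall i, G i (f i)) -> x = \sum_(i <- s) f i ->
  forall i, gcomp x i = if i \in s then f i else 0.
Proof.
move=> us hf ex.
set t := undup (s ++ gsupp x).
have ut : uniq t by exact: undup_uniq.
pose g i := (if i \in s then f i else 0) - gcomp x i.
have hg : forall i, G i (g i).
  move=> i; apply: GB; last exact: compG.
  by case: ifP => _ //; apply: G0.
have sum0 : \sum_(i <- t) g i = 0.
  rewrite sumrB sum_superset //; last by move=> i hi; rewrite mem_undup mem_cat hi.
  have -> : \sum_(i <- t) gcomp x i = \sum_(i <- t) (if i \in gsupp x then gcomp x i else 0).
    by apply: eq_bigr => i _; case: ifP => // /negbT /comp_out ->.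
  rewrite sum_superset //; last by move=> i hi; rewrite mem_undup mem_cat hi orbT.
    by rewrite -ex -comp_sum subrr.
  exact: supp_uniq.
case: HG => _ _ _ _ hind.
move=> i; case it: (i \in t).
  have := hind t g ut hg sum0 i it; rewrite /g => /eqP; rewrite subr_eq0 eq_sym => /eqP.
  by [].
move/negbT: it; rewrite mem_undup mem_cat negb_or => /andP [/negbTE -> /comp_out ->].
by [].
Qed.


Lemma comp_sum_sup x t : uniq t -> {subset gsupp x <= t} -> \sum_(i <- t) gcomp x i = x.
Proof.
move=> ut st; rewrite [RHS]comp_sum -(sum_superset _ (supp_uniq x) ut st).
by apply: eq_bigr => i _; case: ifP => // /negbT /comp_out.
Qed.

Lemma comp_hom j h : G j h -> forall k, gcomp h k = if k == j then h else 0.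
Proof.
move=> hh k; rewrite (@comp_unique [:: j] (fun i => if i == j then h else 0) h) //.
- by rewrite inE; case: (k == j).
- by move=> i; case: ifP => /eqP; [move=> ->|move=> _; apply: G0].
- by rewrite big_seq1 eqxx.
Qed.

Lemma comp0 k : gcomp 0 k = 0.
Proof. by rewrite (comp_hom (G0 0)); case: ifP. Qed.

Lemma compD x y k : gcomp (x + y) k = gcomp x k + gcomp y k.
Proof.
set t := undup (gsupp x ++ gsupp y).
have ut : uniq t by exact: undup_uniq.
rewrite (@comp_unique t (fun i => gcomp x i + gcomp y i) (x + y)) //.
- case: ifP => // /negbT; rewrite mem_undup mem_cat negb_or => /andP [hx hy].
  by rewrite !comp_out // addr0.
- by move=> i; apply: GD; apply: compG.
- rewrite big_split /= !comp_sum_sup //.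
  + by move=> i hi; rewrite mem_undup mem_cat hi orbT.
  + by move=> i hi; rewrite mem_undup mem_cat hi.
Qed.

Lemma compN x k : gcomp (- x) k = - gcomp x k.
Proof. by apply/eqP; rewrite -subr_eq0 opprK -compD addNr comp0. Qed.

Lemma compB x y k : gcomp (x - y) k = gcomp x k - gcomp y k.
Proof. by rewrite compD compN. Qed.

Lemma comp_bigsum (I : Type) (r : seq I) (F : I -> B) k :
  gcomp (\sum_(l <- r) F l) k = \sum_(l <- r) gcomp (F l) k.
Proof.
elim: r => [|a r IH]; first by rewrite !big_nil comp0.
by rewrite !big_cons compD IH.
Qed.

Lemma comp_homsum (s : seq int) (f : int -> B) k :
  (forall i, i \in s -> G i (f i)) ->
  gcomp (\sum_(i <- s) f i) k = \sum_(i <- s) (if i == k then f i else 0).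
Proof.
move=> hf; rewrite comp_bigsum big_seq [RHS]big_seq; apply: eq_bigr => i hi.
by rewrite (comp_hom (hf i hi)) eq_sym.
Qed.

Lemma compM_hom e h y k : G e h -> gcomp (h * y) k = h * gcomp y (k - e).
Proof.
move=> hh.
have -> : h * y = \sum_(i <- gsupp y) h * gcomp y i by rewrite {1}(comp_sum y) mulr_sumr.
rewrite comp_bigsum.
have -> : \sum_(i <- gsupp y) gcomp (h * gcomp y i) k
   = \sum_(i <- gsupp y) (if i == k - e then h * gcomp y i else 0).
  apply: eq_bigr => i _; rewrite (comp_hom (GM hh (compG y i))).
  by rewrite [i == _]eq_sym subr_eq [i + e]addrC.
rewrite sum_pick; last exact: supp_uniq.
by case: ifP => // /negbT /comp_out ->; rewrite mulr0.
Qed.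

Lemma compM x y k :
  gcomp (x * y) k = \sum_(i <- gsupp x) gcomp x i * gcomp y (k - i).
Proof.
rewrite {1}(comp_sum x) mulr_suml comp_bigsum; apply: eq_bigr => i _.
by rewrite (compM_hom _ _ (compG x i)).
Qed.


Lemma sum_nz_ex (I : eqType) (r : seq I) (F : I -> B) :
  \sum_(i <- r) F i != 0 -> exists2 i, i \in r & F i != 0.
Proof.
elim: r => [|a r IH]; first by rewrite big_nil eqxx.
rewrite big_cons; case: (eqVneq (F a) 0) => [->|h]; last by exists a; rewrite ?mem_head.
by rewrite add0r => /IH [i hi hF]; exists i; rewrite ?inE ?hi ?orbT.
Qed.

Definition homcls (d : nat) (r : int) (x : B) :=
  forall k, gcomp x k != 0 -> (d%:Z %| k - r)%Z.

Lemma veroneseP d x : veronese G d x <-> homcls d 0 x.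
Proof.
split.
  case=> s [f [hf ->]] k; rewrite comp_bigsum => /sum_nz_ex [i hi].
  case: (hf i hi) => hd hg; rewrite (comp_hom hg).
  by case: (k =P i) => [-> _|_]; [rewrite subr0 | rewrite eqxx].
move=> hx; exists [seq i <- gsupp x | (d%:Z %| i)%Z], (gcomp x); split.
  by move=> i; rewrite mem_filter => /andP [h _]; split => //; apply: compG.
rewrite big_filter {1}(comp_sum x) (bigID (fun i => (d%:Z %| i)%Z)) /= [X in _ + X]big1 ?addr0 //.
by move=> i /negbTE hi; apply/eqP; apply: contraFT hi => /hx; rewrite subr0.
Qed.

Lemma homclsD d r x y : homcls d r x -> homcls d r y -> homcls d r (x + y).
Proof.
move=> hx hy k; rewrite compD => h.
case: (eqVneq (gcomp x k) 0) => [e|]; last exact: hx.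
by apply: hy; rewrite e add0r in h.
Qed.

Lemma homclsN d r x : homcls d r x -> homcls d r (- x).
Proof. by move=> hx k; rewrite compN oppr_eq0; apply: hx. Qed.

Lemma homclsB d r x y : homcls d r x -> homcls d r y -> homcls d r (x - y).
Proof. by move=> hx hy; apply: homclsD => //; apply: homclsN. Qed.

Lemma homcls0 d r : homcls d r 0.
Proof. by move=> k; rewrite comp0 eqxx. Qed.

Lemma homcls_sum d r (I : eqType) (s : seq I) (F : I -> B) :
  (forall i, i \in s -> homcls d r (F i)) -> homcls d r (\sum_(i <- s) F i).
Proof.
elim: s => [|a s IH] hF; first by rewrite big_nil; apply: homcls0.
rewrite big_cons; apply: homclsD; first by apply: hF; rewrite mem_head.
by apply: IH => i hi; apply: hF; rewrite inE hi orbT.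
Qed.

Lemma homcls_hom d i h : G i h -> homcls d i h.
Proof.
by move=> hh k; rewrite (comp_hom hh); case: (k =P i) => [-> _|_]; [rewrite subrr dvdz0|rewrite eqxx].
Qed.

Lemma homclsM d r r' x y : homcls d r x -> homcls d r' y -> homcls d (r + r') (x * y).
Proof.
move=> hx hy k; rewrite compM => /sum_nz_ex [i hi]; rewrite mulf_eq0 negb_or.
case/andP => /hx h1 /hy h2.
have -> : k - (r + r') = (i - r) + (k - i - r') by ring.
by apply: rpredD.
Qed.


Lemma homcls_shift d r r' x : (d%:Z %| r - r')%Z -> homcls d r x -> homcls d r' x.
Proof.
move=> hr hx k /hx h.
have -> : k - r' = (k - r) + (r - r') by ring.
by apply: rpredD.
Qed.

Lemma ver_hom d i h : G i h -> (d%:Z %| i)%Z -> veronese G d h.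
Proof. by move=> hh hd; apply/veroneseP; apply: homcls_shift (homcls_hom d hh); rewrite subr0. Qed.

End Grading.

Section Ideals.
Variable B : idomainType.
Implicit Types P Q : B -> Prop.

Lemma id0 P : is_ideal P -> P 0. Proof. by case. Qed.
Lemma idB P x y : is_ideal P -> P x -> P y -> P (x - y). Proof. by case=> _ h _; apply: h. Qed.
Lemma idMl P a x : is_ideal P -> P x -> P (a * x). Proof. by case=> _ _ h; apply: h. Qed.
Lemma idMr P a x : is_ideal P -> P x -> P (x * a). Proof. by move=> hP hx; rewrite mulrC; apply: idMl. Qed.
Lemma idN P x : is_ideal P -> P x -> P (- x).
Proof. by move=> hP hx; rewrite -sub0r; apply: idB => //; apply: id0. Qed.
Lemma idD P x y : is_ideal P -> P x -> P y -> P (x + y).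
Proof. by move=> hP hx hy; rewrite -[y]opprK; apply: idB => //; apply: idN. Qed.
Lemma id_sum P (I : Type) (r : seq I) (F : I -> B) :
  is_ideal P -> (forall i, List.In i r -> P (F i)) -> P (\sum_(i <- r) F i).
Proof.
move=> hP; elim: r => [|a r IH] hF; first by rewrite big_nil; apply: id0.
rewrite big_cons; apply: idD => //; first by apply: hF; left.
by apply: IH => i hi; apply: hF; right.
Qed.

Lemma prime_pow P x n : is_prime_ideal P -> P (x ^+ n) -> P x.
Proof.
case=> hI h1 hm; elim: n => [|n IH]; first by rewrite expr0 => h; rewrite -[x]mulr1; apply: idMl.
by rewrite exprS => /hm [] // /IH.
Qed.

Lemma prime_mul P x y : is_prime_ideal P -> ~ P x -> ~ P y -> ~ P (x * y).
Proof. by case=> _ _ hm hx hy /hm []. Qed.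

Lemma prime_exp P x n : is_prime_ideal P -> ~ P x -> ~ P (x ^+ n).
Proof. by move=> hP hx /(prime_pow hP). Qed.

Lemma noeth_max : noetherian B -> forall F : (B -> Prop) -> Prop,
  (forall J, F J -> is_ideal J) -> (exists J, F J) ->
  exists M, F M /\ forall J, F J -> subsetB M J -> subsetB J M.
Proof.
move=> hN F hF [J0 hJ0]; apply: NNPP => hno.
have step : forall M : {M | F M}, {J : {J | F J} |
    subsetB (sval M) (sval J) /\ ~ subsetB (sval J) (sval M)}.
  move=> [M hM]; apply: constructive_indefinite_description.
  have : ~ (forall J, F J -> subsetB M J -> subsetB J M) by move=> h; apply: hno; exists M.
  move/not_all_ex_not => [J] hJJ.
  have [hJ hJ2] := imply_to_and _ _ hJJ.
  have [h1 h2] := imply_to_and _ _ hJ2.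
  by exists (exist _ J hJ).
pose fix ch n := if n is n'.+1 then sval (step (ch n')) else exist F J0 hJ0.
have [N hNN] := hN (fun n => sval (ch n)) (fun n => hF _ (svalP (ch n)))
   (fun n => proj1 (svalP (step (ch n)))).
have := proj2 (svalP (step (ch N))); apply => x hx.
by apply/(hNN N.+1 (leqnSn N)).
Qed.

End Ideals.

Lemma ex_min_nat (P : nat -> Prop) : (exists n, P n) -> exists n, P n /\ forall m, P m -> (n <= m)%N.
Proof.
move=> [n hn].
suff H : forall N n, (n <= N)%N -> P n -> exists n, P n /\ forall m, P m -> (n <= m)%N.
  exact: (H n n).
elim=> [|N IH] k hk hPk.
  by exists k; split => // m _; move: hk; rewrite leqn0 => /eqP ->.
case: (classic (exists m, P m /\ (m < k)%N)) => [[m [hm hmk]]|hno].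
  by apply: (IH m) => //; rewrite -ltnS (leq_trans hmk hk).
exists k; split; first done.
move=> m hm; rewrite leqNgt; apply/negP => hmk; apply: hno; by exists m.
Qed.

Definition zcomb (S : int -> Prop) (x : int) :=
  exists l : seq (int * int), (forall p, p \in l -> S p.2) /\ x = \sum_(p <- l) p.1 * p.2.

Lemma zcombD S x y : zcomb S x -> zcomb S y -> zcomb S (x + y).
Proof.
move=> [l [hl ->]] [l' [hl' ->]]; exists (l ++ l'); split; last by rewrite big_cat.
by move=> p; rewrite mem_cat => /orP [/hl|/hl'].
Qed.

Lemma zcombM S c x : zcomb S x -> zcomb S (c * x).
Proof.
move=> [l [hl ->]]; exists [seq (c * p.1, p.2) | p <- l]; split.
  by move=> p /mapP [q hq ->]; exact: (hl q hq).
by rewrite big_map mulr_sumr; apply: eq_bigr => p _; rewrite mulrA.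
Qed.

Lemma zcomb_in S s : S s -> zcomb S s.
Proof. by move=> hs; exists [:: (1, s)]; split; [move=> p; rewrite inE => /eqP -> | rewrite big_seq1 mul1r]. Qed.

Lemma zcomb_dvd S c x : (forall i, S i -> (c %| i)%Z) -> zcomb S x -> (c %| x)%Z.
Proof.
move=> hc [l [hl ->]]; rewrite big_seq; apply: rpred_sum => p hp.
by apply: dvdz_mull; apply: hc; apply: hl.
Qed.

Lemma gcd_exists S : exists g, is_gcd_set S g /\ zcomb S g.
Proof.
case: (classic (exists x, zcomb S x /\ x != 0)) => [[x [hx hx0]]|hno]; last first.
  exists 0; split; last by exists [::]; split => //; rewrite big_nil.
  split => //.
  move=> i hi; case: (eqVneq i 0) => [->|hi0]; first exact: dvdz0.
  by exfalso; apply: hno; exists i; split => //; apply: zcomb_in.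
have hxa : zcomb S (`|x|%N%:Z).
  rewrite abszE; case: (lerP 0 x) => h; first by rewrite ger0_norm.
  by rewrite ltr0_norm // -mulN1r; apply: zcombM.
have hxp : (0 < `|x|)%N by rewrite absz_gt0.
have [n [[hn0 hn] hmin]] := ex_min_nat (P := fun n => (0 < n)%N /\ zcomb S n%:Z)
  (ex_intro _ `|x|%N (conj hxp hxa)).
exists n%:Z; split => //; split => //.
  move=> i hi; apply/dvdz_mod0P.
  set r := (i %% n)%Z.
  have hr : zcomb S r.
    have -> : r = i + (- (i %/ n)%Z) * n%:Z by rewrite /r {2}(divz_eq i n); ring.
    by apply: zcombD; [apply: zcomb_in | apply: zcombM].
  have r0 : 0 <= r by apply: modz_ge0; rewrite eqz_nat -lt0n.
  have rn : r < n%:Z by apply: ltz_pmod; rewrite ltz_nat.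
  apply/eqP; apply: contraT => hr0.
  have := hmin `|r|%N; rewrite abszE ger0_norm //.
  move=> /(_ (conj _ hr)).
  rewrite absz_gt0 => /(_ hr0).
  move=> hle; move: rn; rewrite -(gez0_abs r0) ltz_nat ltnNge hle //.
by move=> c hc; apply: zcomb_dvd hc hn.
Qed.

Section Frac.
Variable B : idomainType.
Local Notation tf := (@FracField.tofrac B).

Lemma tf_inj : injective tf.
Proof. by move=> x y /eqP; rewrite tofrac_eq => /eqP. Qed.

Lemma acc_int (q : B) (w : {fraction B}) :
  noetherian B -> normal_domain B -> q != 0 ->
  (forall n, exists v, tf v = tf q * w ^+ n) -> exists b, w = tf b.
Proof.
move=> hN hnorm q0 hv.
pose I n (t : B) := exists p : {poly B}, (size p <= n.+1)%N /\ tf t = tf q * (map_poly tf p).[w].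
have hI : forall n, is_ideal (I n).
  move=> n; split.
  - by exists 0; split; rewrite ?size_poly0 // map_poly0 horner0 mulr0 tofrac0.
  - move=> x y [p [hp ex]] [p' [hp' ey]]; exists (p - p'); split.
      by apply: leq_trans (size_polyD _ _) _; rewrite size_polyN geq_max hp hp'.
    by rewrite tofracB ex ey rmorphB hornerD hornerN mulrDr mulrN.
  - move=> a x [p [hp ex]]; exists (a *: p); split.
      by apply: leq_trans (size_scale_leq _ _) hp.
    by rewrite tofracM ex map_polyZ hornerZ mulrCA.
have hsub : forall n, subsetB (I n) (I n.+1).
  by move=> n t [p [hp e]]; exists p; split => //; apply: leq_trans hp _.
have [N hNN] := hN I hI hsub.
have [v hv'] := hv N.+1.
have : I N.+1 v.
  exists (GRing.exp (polyX B) N.+1); split; first by rewrite size_polyXn.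
  by rewrite map_polyXn hornerXn.
move/(hNN N.+1 (leqnSn N)) => [p [hp ev]].
apply: hnorm; exists ('X^(N.+1) - p); split.
  rewrite monicE lead_coefDl ?lead_coefXn // size_polyN size_polyXn ltnS //.
rewrite rootE rmorphB /= map_polyXn hornerD hornerN hornerXn subr_eq0.
have : tf q * w ^+ N.+1 = tf q * (map_poly tf p).[w] by rewrite -hv' ev.
have q0' : tf q != 0 by rewrite tofrac_eq0.
by move/(mulfI q0') ->.
Qed.

End Frac.

Lemma unit_neq0 (R : unitRingType) (x : R) : x \is a GRing.unit -> x != 0.
Proof. by apply: contraTneq => ->; rewrite unitr0. Qed.

Section Deriv.
Variable B : idomainType.
Variable G : int -> B -> Prop.
Hypothesis HG : is_Zgrading G.
Hypothesis hQ : contains_Q B.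
Variable d' : nat.
Local Notation d := d'.+1.
Local Notation A := (veronese G d).
Variable delta : B -> B.
Hypothesis hdel : derivation_on A delta.
Local Notation gcomp := (gcomp HG).
Local Notation gsupp := (gsupp HG).

Lemma nat_neq0 n : (n.+1)%:R != 0 :> B.
Proof. exact: unit_neq0 (hQ n). Qed.

Lemma G_pow i h n : G i h -> G (n.+1%:Z * i) (h ^+ n.+1).
Proof.
move=> hh; elim: n => [|n IH]; first by rewrite expr1 mul1r.
rewrite exprS.
have -> : (n.+2)%:Z * i = i + (n.+1)%:Z * i by rewrite -[n.+2]addn1 PoszD mulrDl mul1r addrC.
exact: (GM HG hh IH).
Qed.

Lemma A0 : A 0. Proof. by apply/(veroneseP HG); apply: homcls0. Qed.
Lemma AD x y : A x -> A y -> A (x + y).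
Proof. by move=> /(veroneseP HG) hx /(veroneseP HG) hy; apply/(veroneseP HG); apply: homclsD. Qed.
Lemma AB x y : A x -> A y -> A (x - y).
Proof. by move=> /(veroneseP HG) hx /(veroneseP HG) hy; apply/(veroneseP HG); apply: homclsB. Qed.
Lemma AM x y : A x -> A y -> A (x * y).
Proof.
move=> /(veroneseP HG) hx /(veroneseP HG) hy; apply/(veroneseP HG).
by have := homclsM hx hy; rewrite addr0.
Qed.
Lemma AX x n : A x -> A (x ^+ n.+1).
Proof. by move=> hx; elim: n => [|n IH]; rewrite ?expr1 // exprS; apply: AM. Qed.
Lemma A_hom i h : G i h -> (d%:Z %| i)%Z -> A h.
Proof. exact: ver_hom. Qed.
Lemma A_powd i h : G i h -> A (h ^+ d).
Proof. by move=> hh; apply: A_hom (G_pow d' hh) _; apply: dvdz_mulr; apply: dvdzz. Qed.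

Lemma delD x y : A x -> A y -> delta (x + y) = delta x + delta y.
Proof. by case: hdel => _ h _; apply: h. Qed.
Lemma delM x y : A x -> A y -> delta (x * y) = x * delta y + y * delta x.
Proof. by case: hdel => _ _ h; apply: h. Qed.
Lemma del0 : delta 0 = 0.
Proof.
have h := delD A0 A0; rewrite addr0 -{1}[delta 0]addr0 in h.
by move/addrI: h => <-.
Qed.

Lemma A_sum (I : Type) (r : seq I) (F : I -> B) :
  (forall l, List.In l r -> A (F l)) -> A (\sum_(l <- r) F l).
Proof.
elim: r => [|a r IH] hF; first by rewrite big_nil; apply: A0.
by rewrite big_cons; apply: AD; [apply: hF; left | apply: IH => l hl; apply: hF; right].
Qed.

Lemma del_sum (I : Type) (r : seq I) (F : I -> B) :
  (forall l, List.In l r -> A (F l)) -> delta (\sum_(l <- r) F l) = \sum_(l <- r) delta (F l).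
Proof.
elim: r => [|a r IH] hF; first by rewrite !big_nil del0.
rewrite !big_cons delD; last by apply: A_sum => l hl; apply: hF; right.
  by rewrite IH // => l hl; apply: hF; right.
by apply: hF; left.
Qed.

Lemma del_pow x n : A x -> delta (x ^+ n.+1) = n.+1%:R * x ^+ n * delta x.
Proof.
move=> hx; elim: n => [|n IH]; first by rewrite expr1 expr0 mulr1 mul1r.
rewrite exprS (delM hx (AX n hx)) IH exprS.
rewrite -[n.+2]addn1 natrD -[n.+1]addn1 natrD; ring.
Qed.

Definition beta (h : B) := d%:R * h ^+ d'.
Definition Dh (h : B) : B :=
  if h == 0 then 0 else epsilon (inhabits 0) (fun y => beta h * y = delta (h ^+ d)).

Hypothesis Hex : forall i h, G i h -> h != 0 -> exists y, beta h * y = delta (h ^+ d).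

Lemma beta_neq0 h : h != 0 -> beta h != 0.
Proof. by move=> h0; apply: mulf_neq0; [apply: nat_neq0 | apply: expf_neq0]. Qed.

Lemma Dh0 : Dh 0 = 0. Proof. by rewrite /Dh eqxx. Qed.

Lemma Dh_spec i h : G i h -> beta h * Dh h = delta (h ^+ d).
Proof.
move=> hh; case h0: (h == 0).
  by move/eqP: h0 => ->; rewrite Dh0 mulr0 expr0n /= del0.
rewrite /Dh h0; apply: (epsilon_spec (inhabits 0) (fun y => beta h * y = delta (h ^+ d))).
by apply: (Hex hh); rewrite h0.
Qed.

Lemma Dh_agree i h : G i h -> (d%:Z %| i)%Z -> Dh h = delta h.
Proof.
move=> hh hd; case: (eqVneq h 0) => [->|h0]; first by rewrite Dh0 del0.
apply: (mulfI (beta_neq0 h0)); rewrite (Dh_spec hh) del_pow //; exact: A_hom hh hd.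
Qed.

Lemma Dh_mul i j h g : G i h -> G j g -> Dh (h * g) = h * Dh g + g * Dh h.
Proof.
move=> hh hg; case: (eqVneq h 0) => [->|h0]; first by rewrite mul0r Dh0 mul0r mulr0 addr0.
case: (eqVneq g 0) => [->|g0]; first by rewrite mulr0 Dh0 mul0r mulr0 addr0.
have hg0 : h * g != 0 by apply: mulf_neq0.
apply: (mulfI (beta_neq0 hg0)); rewrite (Dh_spec (GM HG hh hg)) exprMn (delM (A_powd hh) (A_powd hg)).
rewrite -(Dh_spec hh) -(Dh_spec hg) /beta !exprS exprMn; ring.
Qed.

Lemma Dh_u i j h u : G i h -> G j u -> u != 0 -> (d%:Z %| i + j)%Z ->
  beta u * u * Dh h = beta u * delta (h * u) - h * delta (u ^+ d).
Proof.
move=> hh hu u0 hd; case: (eqVneq h 0) => [->|h0].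
  by rewrite Dh0 mulr0 mul0r del0 mulr0 mul0r subr0.
have hu' : A (h * u) := A_hom (GM HG hh hu) hd.
apply: (mulfI (beta_neq0 h0)).
have e1 := del_pow d' hu'.
have e2 : delta ((h * u) ^+ d) = h ^+ d * delta (u ^+ d) + u ^+ d * delta (h ^+ d).
  by rewrite exprMn (delM (A_powd hh) (A_powd hu)).
have e3 := Dh_spec hh.
apply/eqP; rewrite -subr_eq0; apply/eqP.
have -> : beta h * (beta u * u * Dh h) - beta h * (beta u * delta (h * u) - h * delta (u ^+ d))
  = beta u * u * (beta h * Dh h - delta (h ^+ d))
    - d%:R * (d%:R * (h * u) ^+ d' * delta (h * u) - delta ((h * u) ^+ d))
    - d%:R * (delta ((h * u) ^+ d) - h ^+ d * delta (u ^+ d) - u ^+ d * delta (h ^+ d)).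
  rewrite /beta !exprS exprMn; ring.
by rewrite e3 -e1 e2; ring.
Qed.

Lemma Dh_add i h1 h2 : G i h1 -> G i h2 -> Dh (h1 + h2) = Dh h1 + Dh h2.
Proof.
move=> hh1 hh2.
case: (classic (exists h0, G i h0 /\ h0 != 0)) => [[h0 [hh0 h00]]|hno]; last first.
  have z : forall h, G i h -> h = 0.
    by move=> h hh; apply/eqP; apply: NNPP => hn; apply: hno; exists h; split => //; apply/negP.
  by rewrite (z _ hh1) (z _ hh2) addr0 Dh0 addr0.
set u := h0 ^+ (d' + d').+1.
have hu : G (((d' + d').+1)%:Z * i) u by apply: G_pow.
have u0 : u != 0 by apply: expf_neq0.
have hdiv : (d%:Z %| i + ((d' + d').+1)%:Z * i)%Z.
  apply/dvdzP; exists (2 * i).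
  have -> : ((d' + d').+1)%:Z = 2 * d'%:Z + 1 by lia.
  have -> : d%:Z = d'%:Z + 1 by lia.
  ring.
apply: (mulfI (mulf_neq0 (beta_neq0 u0) u0)).
rewrite mulrDr (Dh_u (GD HG hh1 hh2) hu u0 hdiv) (Dh_u hh1 hu u0 hdiv) (Dh_u hh2 hu u0 hdiv).
rewrite mulrDl delD; first ring.
  exact: A_hom (GM HG hh1 hu) hdiv.
exact: A_hom (GM HG hh2 hu) hdiv.
Qed.

Definition D (x : B) := \sum_(i <- gsupp x) Dh (gcomp x i).

Lemma D_sup x t : uniq t -> {subset gsupp x <= t} -> D x = \sum_(i <- t) Dh (gcomp x i).
Proof.
move=> ut st; rewrite /D -(sum_superset _ (supp_uniq HG x) ut st); apply: eq_bigr => i _.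
by case: ifP => // /negbT /comp_out ->; rewrite Dh0.
Qed.

Lemma D_add x y : D (x + y) = D x + D y.
Proof.
set t := undup (gsupp x ++ gsupp y ++ gsupp (x + y)).
have ut : uniq t by exact: undup_uniq.
rewrite (D_sup (x := x + y) ut); last by move=> i hi; rewrite mem_undup !mem_cat hi !orbT.
rewrite (D_sup (x := x) ut); last by move=> i hi; rewrite mem_undup !mem_cat hi.
rewrite (D_sup (x := y) ut); last by move=> i hi; rewrite mem_undup !mem_cat hi !orbT.
rewrite -big_split; apply: eq_bigr => i _.
by rewrite (compD HG) (Dh_add (compG HG x i) (compG HG y i)).
Qed.

Lemma D0 : D 0 = 0.
Proof. by rewrite /D big1 // => i _; rewrite (comp0 HG) Dh0. Qed.

Lemma D_hom i h : G i h -> D h = Dh h.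
Proof.
move=> hh; set t := undup (i :: gsupp h).
have ut : uniq t by exact: undup_uniq.
rewrite (D_sup (x := h) ut); last by move=> k hk; rewrite mem_undup inE hk orbT.
have -> : \sum_(k <- t) Dh (gcomp h k) = \sum_(k <- t) (if k == i then Dh h else 0).
  by apply: eq_bigr => k _; rewrite (comp_hom HG hh); case: ifP => _ //; rewrite Dh0.
by rewrite sum_pick // mem_undup mem_head.
Qed.

Lemma D_sum (I : Type) (r : seq I) (F : I -> B) :
  D (\sum_(l <- r) F l) = \sum_(l <- r) D (F l).
Proof.
elim: r => [|a r IH]; first by rewrite !big_nil D0.
by rewrite !big_cons D_add IH.
Qed.

Lemma D_leibniz x y : D (x * y) = x * D y + y * D x.
Proof.
transitivity (\sum_(i <- gsupp x) \sum_(j <- gsupp y)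
   (gcomp x i * Dh (gcomp y j) + gcomp y j * Dh (gcomp x i))).
  rewrite {1}(comp_sum HG x) {1}(comp_sum HG y) mulr_suml D_sum; apply: eq_bigr => i _.
  rewrite mulr_sumr D_sum; apply: eq_bigr => j _.
  by rewrite (D_hom (GM HG (compG HG x i) (compG HG y j))) (Dh_mul (compG HG x i) (compG HG y j)).
rewrite (eq_bigr _ (fun i _ => big_split _ _ _ _ _)) big_split /=.
congr (_ + _).
  rewrite {3}(comp_sum HG x) mulr_suml; apply: eq_bigr => i _.
  by rewrite /D mulr_sumr.
rewrite exchange_big {3}(comp_sum HG y) mulr_suml; apply: eq_bigr => j _.
by rewrite /D mulr_sumr.
Qed.

Lemma D_derivation : derivation D.
Proof. split; [exact: D_add | exact: D_leibniz]. Qed.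

Lemma comp_A x i : A x -> A (gcomp x i).
Proof.
move=> /(veroneseP HG) hx; case: (eqVneq (gcomp x i) 0) => [->|hi]; first exact: A0.
by apply: A_hom (compG HG x i) _; have := hx i hi; rewrite subr0.
Qed.

Lemma D_agree x : A x -> D x = delta x.
Proof.
move=> hx; rewrite {2}(comp_sum HG x) del_sum; last by move=> l _; apply: comp_A.
apply: eq_bigr => i _.
case: (eqVneq (gcomp x i) 0) => [->|hi]; first by rewrite Dh0 del0.
apply: Dh_agree (compG HG x i) _.
by move/(veroneseP HG): hx => /(_ i hi); rewrite subr0.
Qed.

Lemma der0 (D' : B -> B) : derivation D' -> D' 0 = 0.
Proof.
case=> hD _; have h := hD 0 0; rewrite addr0 -{1}[D' 0]addr0 in h.
by move/addrI: h => <-.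
Qed.

Lemma der_sum (D' : B -> B) (I : Type) (r : seq I) (F : I -> B) : derivation D' ->
  D' (\sum_(l <- r) F l) = \sum_(l <- r) D' (F l).
Proof.
move=> hD; elim: r => [|a r IH]; first by rewrite !big_nil der0.
by rewrite !big_cons (proj1 hD) IH.
Qed.

Lemma der_pow (D' : B -> B) h n : derivation D' ->
  D' (h ^+ n.+1) = n.+1%:R * h ^+ n * D' h.
Proof.
case=> _ hM; elim: n => [|n IH]; first by rewrite expr1 expr0 mulr1 mul1r.
rewrite exprS hM IH exprS.
rewrite -[n.+2]addn1 natrD -[n.+1]addn1 natrD; ring.
Qed.

Lemma D_unique (D' : B -> B) : derivation D' -> (forall x, A x -> D' x = delta x) ->
  forall x, D' x = D x.
Proof.
move=> hD hag x; rewrite {1}(comp_sum HG x) der_sum //; apply: eq_bigr => i _.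
set h := gcomp x i; have hh : G i h := compG HG x i.
case: (eqVneq h 0) => [->|h0]; first by rewrite der0 // Dh0.
apply: (mulfI (beta_neq0 h0)); rewrite (Dh_spec hh) -hag; last exact: A_powd hh.
by rewrite der_pow.
Qed.

End Deriv.

Lemma max_in_seq (s : seq int) (Q : int -> Prop) :
  (exists2 k, k \in s & Q k) -> exists m, [/\ m \in s, Q m & forall k, k \in s -> Q k -> k <= m].
Proof.
elim: s => [|a s IH]; first by case.
move=> [k hk hQ].
case: (classic (exists2 k, k \in s & Q k)) => [/IH [m [hm hQm hmax]]|hno].
  case: (classic (Q a /\ m <= a)) => [[hQa hma]|hna].
    exists a; split => //; first exact: mem_head.
    move=> k'; rewrite inE => /orP [/eqP -> //|hk' hQk'].
    by apply: le_trans (hmax k' hk' hQk') hma.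
  exists m; split => //; first by rewrite inE hm orbT.
  move=> k'; rewrite inE => /orP [/eqP -> hQa|]; last exact: hmax.
  by case: (lerP a m) => // hma; exfalso; apply: hna; split => //; apply: ltW.
have hQa : Q a.
  move: hk; rewrite inE => /orP [/eqP <- //|hk]; by exfalso; apply: hno; exists k.
exists a; split => //; first exact: mem_head.
move=> k'; rewrite inE => /orP [/eqP -> //|hk' hQk'].
by exfalso; apply: hno; exists k'.
Qed.

Section Escape.
Variable B : idomainType.
Variable G : int -> B -> Prop.
Hypothesis HG : is_Zgrading G.
Hypothesis hsat : saturated_in_codim1 G.
Local Notation gcomp := (gcomp HG).
Local Notation gsupp := (gsupp HG).

Lemma id_sum_cond (P : B -> Prop) (r : seq int) (p : pred int) (F : int -> B) :
  is_ideal P -> (forall i, i \in r -> p i -> P (F i)) -> P (\sum_(i <- r | p i) F i).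
Proof.
move=> hP; elim: r => [|a r IH] hF; first by rewrite big_nil; apply: id0.
rewrite big_cons; case: ifP => ha.
  apply: idD => //; first by apply: hF; rewrite ?mem_head.
  by apply: IH => i hi; apply: hF; rewrite inE hi orbT.
by apply: IH => i hi; apply: hF; rewrite inE hi orbT.
Qed.

Variable P : B -> Prop.
Hypothesis hP : is_prime_ideal P.
Hypothesis hP1 : forall Q, is_prime_ideal Q -> (exists x, Q x /\ x != 0) ->
  subsetB Q P -> subsetB P Q.

Let hPI : is_ideal P. Proof. by case: hP. Qed.

Definition Ps (x : B) := forall k, P (gcomp x k).

Lemma Ps_sub x : Ps x -> P x.
Proof. by move=> hx; rewrite (comp_sum HG x); apply: (id_sum (I:=int)) => // i _; apply: hx. Qed.

Lemma Ps_hom j h : G j h -> P h -> Ps h.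
Proof. by move=> hh hPh k; rewrite (comp_hom HG hh); case: ifP => _ //; apply: id0. Qed.

Lemma Ps_ideal : is_ideal Ps.
Proof.
split.
- by move=> k; rewrite (comp0 HG); apply: id0.
- by move=> x y hx hy k; rewrite (compB HG); apply: idB.
- move=> a x hx k; rewrite (compM HG); apply: (id_sum (I:=int)) => // i _.
  by apply: idMl.
Qed.

Lemma notPs_ex x : ~ Ps x -> exists2 k, k \in gsupp x & ~ P (gcomp x k).
Proof.
move/not_all_ex_not => [k hk]; exists k => //.
case hks: (k \in gsupp x) => //; exfalso; apply: hk.
by rewrite (comp_out (negbT hks)); apply: id0.
Qed.

Lemma Ps_top x : ~ Ps x -> exists i0, ~ P (gcomp x i0) /\ forall k, i0 < k -> P (gcomp x k).
Proof.
move/notPs_ex => hex.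
have [m [hm hQm hmax]] := max_in_seq hex.
exists m; split => // k hk; apply: NNPP => hn.
case hks: (k \in gsupp x); last by apply: hn; rewrite (comp_out (negbT hks)); apply: id0.
by have := hmax k hks hn; rewrite leNgt hk.
Qed.

Lemma Ps_prime : is_prime_ideal Ps.
Proof.
split; first exact: Ps_ideal.
  by move/Ps_sub; case: hP.
move=> x y hxy; apply: NNPP => /not_or_and [hx hy].
have [i0 [hi0 hi0m]] := Ps_top hx.
have [j0 [hj0 hj0m]] := Ps_top hy.
have := hxy (i0 + j0); rewrite (compM HG).
case hin: (i0 \in gsupp x); last by move: hi0; rewrite (comp_out (negbT hin)) => h; exfalso; apply: h; apply: id0.
rewrite (bigD1_seq i0) //=; last exact: supp_uniq.
have -> : i0 + j0 - i0 = j0 by ring.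
move=> hsum; apply: (prime_mul hP hi0 hj0).
have hrest : P (\sum_(i <- gsupp x | i != i0) gcomp x i * gcomp y (i0 + j0 - i)).
  apply: id_sum_cond => // i _ hii0.
  case: (ltrP i0 i) => hlt; first by apply: idMr => //; apply: hi0m.
  have hlt' : i < i0 by rewrite lt_neqAle hii0 hlt.
  apply: idMl => //; apply: hj0m; lia.
by have := idB hPI hsum hrest; rewrite addrK.
Qed.

Lemma Ps_homog : is_homogeneous_ideal G Ps.
Proof.
split; first exact: Ps_ideal.
move=> x hx s f us hf ex i hi k.
rewrite (comp_hom HG (hf i)).
case: ifP => _; last by apply: id0.
have := comp_unique HG us hf ex i; rewrite hi => <-; apply: hx.
Qed.

Lemma Ps_ht1 i b : G i b -> b != 0 -> P b -> height_one_prime Ps.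
Proof.
move=> hb b0 hPb; split; first exact: Ps_prime.
  by exists b; split => //; apply: Ps_hom hb hPb.
move=> Q hQ hQ0 hQs x hx.
apply: (hP1 hQ hQ0); last exact: Ps_sub.
by move=> y /hQs; apply: Ps_sub.
Qed.

Lemma escape_list (d : nat) (l : seq (int * int)) : (0 < d)%N ->
  (forall p, p \in l -> degset_quot G Ps p.2) ->
  forall m : int, exists j u, [/\ G j u, ~ P u & (d%:Z %| j + m * \sum_(p <- l) p.1 * p.2)%Z].
Proof.
move=> d0; elim: l => [|[n j] l IH] hl m.
  have : ~ Ps 1 by move/Ps_sub; case: hP.
  move/not_all_ex_not => [k hk].
  exists (d%:Z * k), (gcomp 1 k ^+ d); split.
  - rewrite -(prednK d0); exact: G_pow (compG HG 1 k).
  - by move/(prime_pow hP).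
  - by rewrite big_nil mulr0 addr0; apply: dvdz_mulr; apply: dvdzz.
have [j' [u' [hu' hPu' hdu']]] := IH (fun p hp => hl p (ltac:(by rewrite inE hp orbT))) m.
have [c [hc hPc]] := hl (n, j) (mem_head _ _).
have hPc' : ~ P c by move=> h; apply: hPc; apply: Ps_hom hc h.
set r := ((- m * n) %% d%:Z)%Z.
have r0 : 0 <= r by apply: modz_ge0; rewrite eqz_nat -lt0n.
set e := (`|r|%N + d.-1)%N.
exists (j' + (e.+1)%:Z * j), (u' * c ^+ e.+1); split.
- by apply: GM => //; apply: G_pow.
- by apply: prime_mul => //; apply: prime_exp.
rewrite big_cons /=.
have -> : j' + (e.+1)%:Z * j + m * (n * j + \sum_(p <- l) p.1 * p.2)
  = (j' + m * \sum_(p <- l) p.1 * p.2) + ((r + m * n) * j + d%:Z * j).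
  rewrite /e; have -> : ((`|r|%N + d.-1).+1)%:Z = r + d%:Z.
    have hr : r = (`|r|%N)%:Z by rewrite gez0_abs.
    have hd : d = d.-1.+1 by rewrite prednK.
    rewrite {2}hr; move: hd; set dd := d.-1; move=> ->; lia.
  ring.
apply: rpredD => //; apply: rpredD; last by apply: dvdz_mulr; apply: dvdzz.
apply: dvdz_mulr.
have -> : r + m * n = - ((- m * n) %/ d%:Z)%Z * d%:Z.
  rewrite /r; move: (divz_eq (- m * n) d%:Z).
  set q := ((- m * n) %/ d%:Z)%Z; set rr := ((- m * n) %% d%:Z)%Z => h.
  apply/eqP; rewrite -subr_eq0.
  have -> : rr + m * n - - q * d%:Z = q * d%:Z + rr - (- m * n) by ring.
  by rewrite -h subrr.
by apply: dvdz_mull; apply: dvdzz.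
Qed.

Lemma escape (d : nat) i b : (0 < d)%N -> G i b -> b != 0 -> P b ->
  exists j u, [/\ G j u, ~ P u & (d%:Z %| i + j)%Z].
Proof.
move=> d0 hb b0 hPb.
have [g1 [hg1 [l [hl el]]]] := gcd_exists (degset_quot G Ps).
have [g2 [hg2 _]] := gcd_exists (degset_B G).
have e12 := hsat Ps_homog (Ps_ht1 hb b0 hPb) hg1 hg2.
have : (g2 %| i)%Z by case: hg2 => _ h _; apply: h; exists b.
move/dvdzP => [q eq].
have [j [u [hu hPu hd]]] := escape_list d0 hl q.
exists j, u; split => //.
by rewrite eq -e12 el addrC.
Qed.

End Escape.

Section Main.
Variable B : idomainType.
Variable G : int -> B -> Prop.
Hypothesis HG : is_Zgrading G.
Hypothesis hQ : contains_Q B.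
Hypothesis hN : noetherian B.
Hypothesis hnorm : normal_domain B.
Hypothesis hsat : saturated_in_codim1 G.
Variable d' : nat.
Local Notation d := d'.+1.
Local Notation A := (veronese G d).
Variable delta : B -> B.
Hypothesis hdel : derivation_on A delta.
Local Notation tf := (@FracField.tofrac B).
Local Notation K := {fraction B}.

Lemma hK (x y : K) : x != 0 -> x * (y / x) = y.
Proof. by move=> x0; rewrite mulrC divfK. Qed.

Definition inB (w : K) := exists y, tf y = w.

Lemma main_exist i b : G i b -> b != 0 -> exists y, beta d' b * y = delta (b ^+ d).
Proof.
move=> hb b0.
set al := delta (b ^+ d); set be := beta d' b.
have be0 : be != 0 by apply: (beta_neq0 hQ).
have tbe0 : tf be != 0 by rewrite tofrac_eq0.
have [dinv hdinv] : exists dinv, d%:R * dinv = 1 :> B.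
  by exists (d%:R)^-1; rewrite mulrV //; apply: hQ.
have td0 : tf (d%:R) != 0 by rewrite tofrac_eq0 (nat_neq0 hQ).
apply: NNPP => hno.
set z : K := tf al / tf be.
have hz : ~ inB z.
  move=> [y ey]; apply: hno; exists y; apply: (@tf_inj B).
  by rewrite tofracM ey /z hK.
pose F (J : B -> Prop) := exists w, [/\ exists u, w = tf u * z, ~ inB w &
   forall t, J t <-> inB (tf t * w)].
have hF : forall J, F J -> is_ideal J.
  move=> J [w [_ _ hJ]]; split.
  - by apply/hJ; exists 0; rewrite tofrac0 mul0r.
  - move=> x y /hJ [y1 e1] /hJ [y2 e2]; apply/hJ; exists (y1 - y2).
    by rewrite tofracB e1 e2 tofracB mulrBl.
  - move=> a x /hJ [y1 e1]; apply/hJ; exists (a * y1).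
    by rewrite !tofracM e1 mulrA.
have hF0 : exists J, F J.
  exists (fun t => inB (tf t * z)), z; split => //; first by exists 1; rewrite tofrac1 mul1r.
have [P [[w [[u0 ew] hw hPw]] hmax]] := noeth_max hN hF hF0.
have hPI : is_ideal P by apply: hF; exists w; split => //; exists u0.
have hP1 : ~ P 1 by move/hPw; rewrite tofrac1 mul1r.
have hPr : is_prime_ideal P.
  split => // x y hxy; apply: NNPP => /not_or_and [hx hy]; apply: hy.
  have hJ : F (fun t => inB (tf t * (tf x * w))).
    exists (tf x * w); split => //.
      by exists (x * u0); rewrite ew tofracM mulrA.
    by move=> h; apply: hx; apply/hPw.
  have hsub : subsetB P (fun t => inB (tf t * (tf x * w))).
    by move=> t /hPw [v ev]; exists (v * x); rewrite tofracM ev; ring.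
  have := hmax _ hJ hsub y; apply.
  by move/hPw: hxy => [v ev]; exists v; rewrite ev tofracM; ring.
have hPc : forall c s, be * s = c * al -> P c.
  move=> c s hs; apply/hPw; exists (u0 * s).
  apply: (mulfI tbe0).
  rewrite ew /z (mulrCA (tf be) (tf c)) (mulrCA (tf be) (tf u0)) (hK _ tbe0).
  have hs' : tf be * tf s = tf c * tf al by rewrite -!tofracM hs.
  by rewrite tofracM [LHS]mulrCA hs' mulrCA.
have [t0 [v0 [hPt0 ev0 hPv0]]] : exists t0 v0, [/\ P t0, tf v0 = tf t0 * w & ~ P v0].
  apply: NNPP => hn.
  have hall : forall t v, P t -> tf v = tf t * w -> P v.
    move=> t v ht ev; apply: NNPP => hv; by apply: hn; exists t, v; split.
  have hseq : forall n, exists v, P v /\ tf v = tf be * w ^+ n.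
    elim=> [|n [v1 [hv1 ev1]]]; first by exists be; split; [apply: (hPc _ al) | rewrite expr0 mulr1].
    have [v' ev'] := proj1 (hPw v1) hv1.
    exists v'; split; first by apply: (hall v1).
    by rewrite ev' ev1 exprS; ring.
  have [b' eb'] := acc_int hN hnorm be0 (fun n => let: ex_intro v (conj _ e) := hseq n in ex_intro _ v e).
  by apply: hw; exists b'.
have hht : forall Q, is_prime_ideal Q -> (exists x, Q x /\ x != 0) -> subsetB Q P -> subsetB P Q.
  move=> Q hQp [q [hq q0]] hQP.
  have hQI : is_ideal Q by case: hQp.
  have [n [v [ev hv]]] : exists n v, tf v = tf q * w ^+ n /\ ~ P v.
    apply: NNPP => hn.
    have hall : forall n v, tf v = tf q * w ^+ n -> P v.
      move=> n v ev; apply: NNPP => hv; by apply: hn; exists n, v; split.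
    have hseq : forall n, exists v, tf v = tf q * w ^+ n.
      elim=> [|n [v ev]]; first by exists q; rewrite expr0 mulr1.
      have [v' ev'] := proj1 (hPw v) (hall n v ev).
      by exists v'; rewrite ev' ev exprS; ring.
    have [b' eb'] := acc_int hN hnorm q0 hseq.
    by apply: hw; exists b'.
  have eq1 : v0 ^+ n * q = t0 ^+ n * v.
    by apply: (@tf_inj B); rewrite !tofracM !tofracXn ev0 ev exprMn -mulrA [w ^+ n * _]mulrC.
  have hQt0 : Q t0.
    have : Q (t0 ^+ n * v) by rewrite -eq1; apply: idMl.
    have [_ _ hm] := hQp; move/hm => [h|hQv]; first exact: prime_pow hQp h.
    by exfalso; apply: hv; apply: hQP.
  move=> t /hPw [s es].
  have eq2 : v0 * t = t0 * s by apply: (@tf_inj B); rewrite !tofracM ev0 es; ring.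
  have : Q (v0 * t) by rewrite eq2; apply: idMr.
  have [_ _ hm] := hQp; move/hm => [hQv0|//].
  by exfalso; apply: hPv0; apply: hQP.
case: (classic (P b)) => hPb; last first.
  apply: (prime_exp hPr (n := d') hPb); apply: (hPc _ (al * dinv)).
  rewrite /be /beta.
  have -> : d%:R * b ^+ d' * (al * dinv) = (d%:R * dinv) * (b ^+ d' * al) by ring.
  by rewrite hdinv mul1r.
have [j [u [hu hPu hdiv]]] := escape HG hsat hPr hht (d := d) (ltn0Sn d') hb b0 hPb.
have hbu : A (b * u) := A_hom HG (GM HG hb hu) hdiv.
apply: (prime_exp hPr (n := d) hPu).
apply: (hPc _ (u ^+ d' * delta (b * u) - b * delta (u ^+ d) * dinv)).
have e1 := del_pow HG hdel d' hbu.
have e2 : delta ((b * u) ^+ d) = b ^+ d * delta (u ^+ d) + u ^+ d * delta (b ^+ d).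
  by rewrite exprMn (delM hdel (A_powd HG d' hb) (A_powd HG d' hu)).
apply/eqP; rewrite -subr_eq0; apply/eqP.
have -> : be * (u ^+ d' * delta (b * u) - b * delta (u ^+ d) * dinv) - u ^+ d * al
   = (d%:R * (b * u) ^+ d' * delta (b * u) - delta ((b * u) ^+ d))
     + (delta ((b * u) ^+ d) - b ^+ d * delta (u ^+ d) - u ^+ d * delta (b ^+ d))
     - b ^+ d * delta (u ^+ d) * (d%:R * dinv - 1).
  rewrite /be /al /beta !exprS exprMn; ring.
by rewrite -e1 e2 hdinv; ring.
Qed.

End Main.

Section Nilp.
Variable B : idomainType.
Hypothesis hQ : contains_Q B.
Variable E : B -> B.
Hypothesis hE : derivation E.

Lemma E0 : E 0 = 0. Proof. exact: der0. Qed.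
Lemma ED x y : E (x + y) = E x + E y. Proof. by case: hE. Qed.
Lemma EM x y : E (x * y) = x * E y + y * E x. Proof. by case: hE. Qed.

Lemma iter0 n : iter n E 0 = 0.
Proof. by elim: n => //= n ->; apply: E0. Qed.
Lemma iterEadd n x y : iter n E (x + y) = iter n E x + iter n E y.
Proof. by elim: n => //= n ->; apply: ED. Qed.
Lemma iterSr' n x : iter n.+1 E x = iter n E (E x).
Proof. exact: iterSr. Qed.
Lemma iterMn n x k : iter n E (x *+ k) = iter n E x *+ k.
Proof.
elim: k => [|k IH]; first by rewrite !mulr0n iter0.
by rewrite !mulrS iterEadd IH.
Qed.
Lemma kill_mono x p k : iter p E x = 0 -> iter (k + p) E x = 0.
Proof. by move=> h; rewrite ssrnat.iterD h iter0. Qed.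

Lemma kill_mul s : forall p q x y, (p + q = s)%N -> iter p E x = 0 -> iter q E y = 0 ->
  iter (p + q).-1 E (x * y) = 0.
Proof.
elim: s => [|s IH] p q x y hs hx hy.
  by move: hs hx => /eqP; rewrite addn_eq0 => /andP [/eqP -> _] /= ->; rewrite mul0r iter0.
case: p hx hs => [|p] hx hs; first by move: hx => /= ->; rewrite mul0r iter0.
case: q hy hs => [|q] hy hs; first by move: hy => /= ->; rewrite mulr0 iter0.
rewrite addSn /= addnS iterSr EM iterEadd.
have -> : iter (p + q) E (x * E y) = 0.
  have := IH p.+1 q x (E y) ltac:(lia) hx ltac:(by rewrite -iterSr).
  by rewrite addSn.
have -> : iter (p + q) E (y * E x) = 0.
  rewrite mulrC.
  have := IH p q.+1 (E x) y ltac:(lia) ltac:(by rewrite -iterSr) hy.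
  by rewrite addnS.
by rewrite addr0.
Qed.

Lemma exact_mul s : forall m m' x y, (m + m' = s)%N -> iter m.+1 E x = 0 -> iter m'.+1 E y = 0 ->
  exists2 C, (0 < C)%N & iter (m + m') E (x * y) = C%:R * (iter m E x * iter m' E y).
Proof.
elim: s => [|s IH] m m' x y hs hx hy.
  by move: hs => /eqP; rewrite addn_eq0 => /andP [/eqP -> /eqP ->]; exists 1%N; rewrite ?mul1r.
rewrite hs iterSr EM iterEadd [y * E x]mulrC.
case: m hx hs => [|m] hx hs.
  move: hx; rewrite /= => hx; rewrite hx mul0r iter0 addr0.
  case: m' hy hs => [|m'] hy hs; first lia.
  have [C hC e] := IH 0%N m' x (E y) ltac:(lia) ltac:(by rewrite /= hx) ltac:(by rewrite -iterSr).
  exists C => //; rewrite add0n in e; have -> : s = m' by lia.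
  by rewrite e iterSr.
case: m' hy hs => [|m'] hy hs.
  move: hy; rewrite /= => hy; rewrite hy mulr0 iter0 add0r.
  have [C hC e] := IH m 0%N (E x) y ltac:(lia) ltac:(by rewrite -iterSr) ltac:(by rewrite /= hy).
  exists C => //; rewrite addn0 in e; have -> : s = m by lia.
  by rewrite e -iterSr.
have [C1 hC1 e1] := IH m.+1 m' x (E y) ltac:(lia) hx ltac:(by rewrite -iterSr).
have [C2 hC2 e2] := IH m m'.+1 (E x) y ltac:(lia) ltac:(by rewrite -iterSr) hy.
exists (C1 + C2)%N; first by rewrite addn_gt0 hC1.
have -> : s = (m.+1 + m')%N by lia.
rewrite e1; have -> : (m.+1 + m')%N = (m + m'.+1)%N by lia.
rewrite e2 -!iterSr natrD; ring.
Qed.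


Lemma iterN n x : iter n E (- x) = - iter n E x.
Proof. by apply/eqP; rewrite -subr_eq0 opprK -iterEadd addNr iter0. Qed.

Lemma iter_natl n k x : iter n E (k%:R * x) = k%:R * iter n E x.
Proof. by rewrite !mulr_natl iterMn. Qed.

Lemma exact_order x : x != 0 -> (exists p, iter p E x = 0) ->
  exists m, iter m E x != 0 /\ iter m.+1 E x = 0.
Proof.
move=> x0 hx; have [p [hp hmin]] := ex_min_nat hx.
case: p hp hmin => [|m] hp hmin; first by move: hp => /= h; rewrite h eqxx in x0.
exists m; split => //; apply/eqP => h.
by have := hmin m h; rewrite ltnn.
Qed.

Lemma E1' : E 1 = 0.
Proof.
have h := EM 1 1; rewrite mulr1 mul1r in h.
have : E 1 + E 1 = E 1 + 0 by rewrite -h addr0.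
by move/addrI.
Qed.

Lemma aux_pow_gen b n : b * E (b ^+ n) = n%:R * b ^+ n * E b.
Proof.
case: n => [|k]; first by rewrite expr0 E1' mulr0 mul0r mul0r.
by rewrite (der_pow _ _ hE) exprS; ring.
Qed.

Lemma cancel_kill a c X m : iter c E a != 0 -> iter c.+1 E a = 0 ->
  (exists p, iter p E X = 0) -> iter (c + m) E (a * X) = 0 -> iter m E X = 0.
Proof.
move=> ha ha' hX hk.
case: (eqVneq X 0) => [->|X0]; first by rewrite iter0.
have [m'' [hm1 hm2]] := exact_order X0 hX.
case: (leqP m''.+1 m) => hm.
  by rewrite -(subnK hm) kill_mono.
have [C hC e] := exact_mul (erefl (c + m'')%N) ha' hm2.
have : iter (c + m'') E (a * X) = 0.
  have -> : (c + m'')%N = ((m'' - m) + (c + m))%N by lia.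
  by rewrite kill_mono.
rewrite e => /eqP; rewrite !mulf_eq0 => /orP [|/orP []].
- by rewrite -(prednK hC) (negbTE (nat_neq0 hQ C.-1)).
- by rewrite (negbTE ha).
- by rewrite (negbTE hm1).
Qed.

End Nilp.

Section G1sec.
Variable B : idomainType.
Variable G : int -> B -> Prop.
Hypothesis HG : is_Zgrading G.
Local Notation gcomp := (gcomp HG).
Local Notation gsupp := (gsupp HG).

Lemma G1 : G 0 1.
Proof.
have [k hk] : exists k, gcomp 1 k != 0.
  apply: NNPP => hno; have : (1 : B) = 0.
    rewrite {1}(comp_sum HG 1) big1 // => k _; apply/eqP; apply: NNPP => h.
    by apply: hno; exists k; apply/negP.
  by move/eqP; rewrite oner_eq0.
set x := gcomp 1 k; have hx : G k x := compG HG 1 k.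
have hz : forall m, m != 0 -> gcomp 1 m = 0.
  move=> m m0; have := compM_hom HG (1 : B) (m + k) hx.
  rewrite mulr1 (comp_hom HG hx) addrK.
  have -> : (m + k == k) = false by apply/negbTE; rewrite -subr_eq0 addrK.
  by move/esym/eqP; rewrite mulf_eq0 (negbTE hk) /= => /eqP.
have -> : (1 : B) = gcomp 1 0.
  rewrite {1}(comp_sum HG 1).
  have -> : \sum_(m <- gsupp 1) gcomp 1 m = \sum_(m <- gsupp 1) (if m == 0 then gcomp 1 m else 0).
    by apply: eq_bigr => m _; case: eqP => // /eqP /hz.
  rewrite sum_pick; last exact: supp_uniq.
  by case: ifP => // /negbT /comp_out ->.
exact: compG.
Qed.

Lemma G_pown i h n : G i h -> G (n%:Z * i) (h ^+ n).
Proof.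
move=> hh; case: n => [|n]; first by rewrite mul0r expr0; apply: G1.
exact: G_pow.
Qed.

End G1sec.

Section LND.
Variable B : idomainType.
Variable G : int -> B -> Prop.
Hypothesis HG : is_Zgrading G.
Hypothesis hQ : contains_Q B.
Variable d' : nat.
Local Notation d := d'.+1.
Local Notation A := (veronese G d).
Variable delta : B -> B.
Hypothesis hdel : derivation_on A delta.
Hypothesis Hex : forall i h, G i h -> h != 0 -> exists y, beta d' h * y = delta (h ^+ d).
Hypothesis hLN : locally_nilpotent_on A delta.
Local Notation gcomp := (gcomp HG).
Local Notation gsupp := (gsupp HG).
Local Notation E := (D HG d' delta).

Let hE : derivation E := D_derivation HG hQ hdel Hex.

Lemma iter_agree x n : A x -> iter n E x = iter n delta x /\ A (iter n delta x).
Proof.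
move=> hx; elim: n => [|n [IH1 IH2]] //=.
rewrite IH1 (D_agree HG hQ hdel Hex IH2); split => //.
by case: hdel => h _ _; apply: h.
Qed.

Lemma nilA x : A x -> exists p, iter p E x = 0.
Proof.
move=> hx; have [n [_ hn]] := hLN hx; exists n.
by rewrite (proj1 (iter_agree n hx)).
Qed.

Lemma compMn x n k : gcomp (x *+ n) k = gcomp x k *+ n.
Proof.
elim: n => [|n IH]; first by rewrite !mulr0n (comp0 HG).
by rewrite !mulrS (compD HG) IH.
Qed.

Lemma E_hom_cls i h : G i h -> homcls HG d i (E h).
Proof.
move=> hh; rewrite (D_hom HG d' delta hh).
case: (eqVneq h 0) => [->|h0]; first by rewrite Dh0; apply: homcls0.
set y := Dh d' delta h.
have hs := Dh_spec HG hdel Hex hh; rewrite -/y in hs.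
have hA : A (delta (h ^+ d)) by case: hdel => hc _ _; apply: hc; apply: A_powd hh.
move/(veroneseP HG): hA; rewrite -hs /beta -mulrA mulr_natl => hA k hk.
have hpow := G_pown HG d' hh.
have := hA (k + d'%:Z * i).
rewrite compMn (compM_hom HG y (k + d'%:Z * i) hpow) addrK.
have hnz : (h ^+ d' * gcomp y k) *+ d != 0.
  by rewrite -mulr_natr mulf_neq0 // ?nat_neq0 // mulf_neq0 // expf_neq0.
move=> /(_ hnz); rewrite subr0.
have -> : k - i = (k + d'%:Z * i) + (- i * d%:Z) by rewrite (_ : d%:Z = d'%:Z + 1); [ring | lia].
by move=> h1; apply: rpredD => //; apply: dvdz_mull; apply: dvdzz.
Qed.

Lemma E_cls r x : homcls HG d r x -> homcls HG d r (E x).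
Proof.
move=> hx; rewrite /D; apply: homcls_sum => i _.
case: (eqVneq (gcomp x i) 0) => [->|hi]; first by rewrite Dh0; apply: homcls0.
rewrite -(D_hom HG d' delta (compG HG x i)).
apply: homcls_shift (E_hom_cls (compG HG x i)).
exact: hx i hi.
Qed.

Lemma E1 : E 1 = 0.
Proof.
have h := proj2 hE 1 1; rewrite mulr1 mul1r in h.
have : E 1 + E 1 = E 1 + 0 by rewrite -h addr0.
by move/addrI.
Qed.

Section Elem.
Variables (i : int) (b : B).
Hypothesis hb : G i b.
Hypothesis b0 : b != 0.

Let Pn n := b ^+ d' * iter n E b.

Lemma Pn_A n : A (Pn n).
Proof.
apply/(veroneseP HG).
have h1 : homcls HG d i (iter n E b).
  elim: n => [|n IH]; first exact: homcls_hom hb.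
  by rewrite iterS; apply: E_cls.
have h2 := @homcls_hom _ _ HG d _ _ (G_pown HG d' hb).
have := homclsM h2 h1; apply: homcls_shift.
have -> : d'%:Z * i + i - 0 = i * d%:Z by rewrite (_ : d%:Z = d'%:Z + 1); [ring | lia].
by apply: dvdz_mull; apply: dvdzz.
Qed.

Lemma aux_pow : b * E (b ^+ d') = d'%:R * b ^+ d' * E b.
Proof. exact: aux_pow_gen. Qed.

Lemma Pn_ident n : d%:R * b ^+ d * Pn n.+1 = d%:R * b ^+ d * E (Pn n) - d'%:R * E (b ^+ d) * Pn n.
Proof.
rewrite /Pn (proj2 hE) (der_pow _ _ hE) iterS.
apply/eqP; rewrite -subr_eq0; apply/eqP.
transitivity (- (d%:R * iter n E b * b ^+ d' * (b * E (b ^+ d') - d'%:R * b ^+ d' * E b))).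
  rewrite exprS; ring.
by rewrite aux_pow subrr mulr0 oppr0.
Qed.

Lemma nil_hom : exists2 n, (0 < n)%N & iter n E b = 0.
Proof.
set a := b ^+ d.
have hAa : A a := A_powd HG d' hb.
have a0 : a != 0 by apply: expf_neq0.
have [c [hc1 hc2]] := exact_order a0 (nilA hAa).
have claim : forall n, (n <= c.+1)%N -> iter (c.+1 - n) E (Pn n) = 0.
  elim=> [|n IH] hn.
    by rewrite subn0 /Pn -exprSr.
  have hm : (c.+1 - n = (c - n).+1)%N by lia.
  have IH' := IH (ltnW hn); rewrite hm in IH'.
  have -> : (c.+1 - n.+1 = c - n)%N by lia.
  set m := (c - n)%N.
  apply: (cancel_kill hQ hE hc1 hc2 (nilA (Pn_A n.+1))).
  have hd0 : d%:R != 0 :> B by apply: nat_neq0.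
  apply: (mulfI hd0); rewrite mulr0 -iter_natl // mulrA Pn_ident.
  rewrite iterEadd // iterN // -!mulrA !iter_natl //.
  have k1 : iter (c + m) E (a * E (Pn n)) = 0.
    have := kill_mul hE (erefl (c.+1 + m)%N) hc2 (_ : iter m E (E (Pn n)) = 0).
    by rewrite addSn /=; apply; rewrite -iterSr.
  have k2 : iter (c + m) E (E a * Pn n) = 0.
    have := kill_mul hE (erefl (c + m.+1)%N) (_ : iter c E (E a) = 0) IH'.
    by rewrite addnS /=; apply; rewrite -iterSr.
  by rewrite k1 k2 !mulr0 subrr.
exists c.+1 => //.
have := claim c.+1 (leqnn _); rewrite subnn /= /Pn => /eqP.
by rewrite mulf_eq0 expf_eq0 (negbTE b0) andbF /= => /eqP.
Qed.

End Elem.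

Lemma E_lnd : locally_nilpotent E.
Proof.
move=> x _.
suff [n hn] : exists n, iter n E x = 0.
  by exists n.+1; split => //; rewrite iterS hn (der0 hE).
rewrite (comp_sum HG x).
elim: (gsupp x) => [|j s [n hn]]; first by exists 0%N; rewrite big_nil.
rewrite big_cons.
have [p _ hp] : exists2 p, (0 < p)%N & iter p E (gcomp x j) = 0.
  case: (eqVneq (gcomp x j) 0) => [->|h0]; first by exists 1%N => //; rewrite /= (der0 hE).
  exact: nil_hom (compG HG x j) h0.
have e1 := kill_mono hE n hp.
have e2 := kill_mono hE p hn.
by exists (p + n)%N; rewrite (iterEadd hE) e2 addnC e1 addr0.
Qed.
End LND.

Unset Implicit Arguments.

Theorem corollary1p4 (B : idomainType) (G : int -> B -> Prop) :
  is_Zgrading G -> noetherian B -> normal_domain B -> contains_Q B ->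
  saturated_in_codim1 G ->
  forall d : nat, (0 < d)%N ->
  (forall delta : B -> B, derivation_on (veronese G d) delta ->
     exists D : B -> B,
       [/\ derivation D, (forall x, veronese G d x -> D x = delta x) &
           forall D' : B -> B, derivation D' ->
             (forall x, veronese G d x -> D' x = delta x) -> forall x, D' x = D x])
  /\
  (forall delta : B -> B, derivation_on (veronese G d) delta ->
     locally_nilpotent_on (veronese G d) delta ->
     exists D : B -> B,
       [/\ derivation D, locally_nilpotent D, (forall x, veronese G d x -> D x = delta x) &
           forall D' : B -> B, derivation D' -> locally_nilpotent D' ->
             (forall x, veronese G d x -> D' x = delta x) -> forall x, D' x = D x]).
Proof.
move=> HG hN hnorm hQ hsat [|d'] // _.
have Hex : forall delta, derivation_on (veronese G d'.+1) delta ->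
    forall i h, G i h -> h != 0 -> exists y, beta d' h * y = delta (h ^+ d'.+1).
  by move=> delta hdel i h hh h0; exact: (main_exist HG hQ hN hnorm hsat hdel hh h0).
split.
- move=> delta hdel; exists (D HG d' delta); split.
  + exact: (D_derivation HG hQ hdel (Hex _ hdel)).
  + by move=> x hx; exact: (D_agree HG hQ hdel (Hex _ hdel) hx).
  + by move=> D' hD' hag x; exact: (D_unique HG hQ hdel (Hex _ hdel) hD' hag x).
- move=> delta hdel hLN; exists (D HG d' delta); split.
  + exact: (D_derivation HG hQ hdel (Hex _ hdel)).
  + exact: (E_lnd HG hQ hdel (Hex _ hdel) hLN).
  + by move=> x hx; exact: (D_agree HG hQ hdel (Hex _ hdel) hx).
  + by move=> D' hD' _ hag x; exact: (D_unique HG hQ hdel (Hex _ hdel) hD' hag x).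
Qed.
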